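(* Let $q=2^m$ and let $f:\mathbb{F}_q\to\mathbb{F}_q$ be a function. The following two properties are equivalent: (i) there exist $\alpha,\beta\in\mathbb{F}_q$ and six distinct elements $x_0,x_1,x_2,x_3,x_4,x_5\in\mathbb{F}_q$ such that $$x_0+x_1=\alpha,\ f(x_0)+f(x_1)=\beta;\quad x_2+x_3=\alpha,\ f(x_2)+f(x_3)=\beta;\quad x_4+x_5=\alpha,\ f(x_4)+f(x_5)=\beta;$$ (ii) there exist four distinct elements $x_0,x_1,x_2,x_4\in\mathbb{F}_q$ with $x_0+x_1+x_2+x_4\neq 0$ such that $$f(x_0)+f(x_1)+f(x_2)+f(x_0+x_1+x_2)=0\quad\text{and}\quad f(x_0)+f(x_1)+f(x_4)+f(x_0+x_1+x_4)=0.$$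
   Context: $\mathbb{F}_q$ denotes the finite field with $q=2^m$ elements (characteristic 2). *)

(* Defs.v *)
From mathcomp Require Import all_boot all_order all_algebra all_field.
Set Implicit Arguments. Unset Strict Implicit. Unset Printing Implicit Defensive.

(* Main.v *)
Require Import Defs.
From mathcomp Require Import all_boot all_order all_algebra all_field.
From mathcomp Require Import ring.
Import GRing.Theory.
Local Open Scope ring_scope.

Lemma L (F : fieldType) (h : (2:F) = 0) (a b p q : F) :
  p = q -> a + b = p + q -> a = b.
Proof.
move=> -> H.
have H2 : a + b = 0 by rewrite H; ring: h.
have Hb : b + b = 0 by ring: h.
by rewrite -[a]addr0 -Hb addrA H2 add0r.
Qed.

Ltac neq h H :=
  apply/eqP; let E := fresh "E" in intro E;
  move/eqP: H => H; apply: H; apply: (@L _ h _ _ _ _ E); ring: h.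

Ltac solve_neq h :=
  apply/eqP; let E := fresh "E" in intro E;
  match goal with
  | H : is_true (?a != ?b) |- _ =>
      move/eqP: H => H; apply: H; apply: (@L _ h _ _ _ _ E); ring: h
  end.

Ltac destr := repeat match goal with H : is_true (_ && _) |- _ => case/andP: H; intros ? ? end.
Ltac splitb := repeat (apply/andP; split); try done.

Lemma aux (F : fieldType) (h : (2:F) = 0) (f : F -> F) :
  (exists (alpha beta x0 x1 x2 x3 x4 x5 : F),
      uniq [:: x0; x1; x2; x3; x4; x5] /\
      x0 + x1 = alpha /\ f x0 + f x1 = beta /\
      x2 + x3 = alpha /\ f x2 + f x3 = beta /\
      x4 + x5 = alpha /\ f x4 + f x5 = beta)
  <->
  (exists (x0 x1 x2 x4 : F),
      uniq [:: x0; x1; x2; x4] /\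
      x0 + x1 + x2 + x4 != 0 /\
      f x0 + f x1 + f x2 + f (x0 + x1 + x2) = 0 /\
      f x0 + f x1 + f x4 + f (x0 + x1 + x4) = 0).
Proof.
split.
- move=> [al [be [x0 [x1 [x2 [x3 [x4 [x5 [U [e1 [e2 [e3 [e4 [e5 e6]]]]]]]]]]]]]].
  move: U; rewrite /= !inE !negb_or => U; destr.
  have E3 : x0 + x1 + x2 = x3 by rewrite e1 -e3; ring: h.
  have E5 : x0 + x1 + x4 = x5 by rewrite e1 -e5; ring: h.
  exists x0, x1, x2, x4; rewrite /= !inE !negb_or.
  rewrite E3 E5; split; last split; last split.
  + splitb.
  + neq h a2.
  + rewrite -addrA e4 e2; ring: h.
  + rewrite -addrA e6 e2; ring: h.
- move=> [y0 [y1 [y2 [y4 [U [Hs [e1 e2]]]]]]].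
  move: U; rewrite /= !inE !negb_or => U; destr.
  exists (y0 + y1), (f y0 + f y1), y0, y1, y2, (y0 + y1 + y2), y4, (y0 + y1 + y4).
  split; last first.
    split; first by [].
    split; first by [].
    split; first by ring: h.
    split; first by apply: (@L _ h _ _ _ _ e1); ring: h.
    split; first by ring: h.
    by apply: (@L _ h _ _ _ _ e2); ring: h.
  rewrite /= !inE !negb_or; splitb.
  - neq h a0.
  - neq h b0.
  - neq h a2.
  - neq h b1.
  - neq h a.
  - neq h Hs.
  - neq h Hs.
  - neq h a1.
  - neq h a.
Qed.

Theorem lemma2p1 (F : finFieldType) (m : nat)
  (hchar : (2 \in [pchar F])%N) (hcard : #|F| = (2 ^ m)%N) (f : F -> F) :
  (exists (alpha beta x0 x1 x2 x3 x4 x5 : F),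
      uniq [:: x0; x1; x2; x3; x4; x5] /\
      x0 + x1 = alpha /\ f x0 + f x1 = beta /\
      x2 + x3 = alpha /\ f x2 + f x3 = beta /\
      x4 + x5 = alpha /\ f x4 + f x5 = beta)
  <->
  (exists (x0 x1 x2 x4 : F),
      uniq [:: x0; x1; x2; x4] /\
      x0 + x1 + x2 + x4 != 0 /\
      f x0 + f x1 + f x2 + f (x0 + x1 + x2) = 0 /\
      f x0 + f x1 + f x4 + f (x0 + x1 + x4) = 0).
Proof.
apply: aux; exact: (addrr_pchar2 hchar 1).
Qed.
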